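(* Let $R$ be a localizable archimedean partially ordered commutative ring and $\varphi\in\mathcal{K}(R)$. Then $\operatorname{dom}\widehat\varphi$ is a subring of $R$ and $\widehat\varphi\colon\operatorname{dom}\widehat\varphi\to\mathbb{R}$ is a positive ring morphism. Moreover, if $r\in R$ and $s\in\operatorname{dom}\widehat\varphi\cap\mathrm{Loc}(R)$ satisfy $r/s\in R^{\mathrm{bd}}_{\mathrm{loc}}$, then $r\in\operatorname{dom}\widehat\varphi$.
   Context: Rings are commutative with unit; subrings contain $1$; ring morphisms are unital. A partially ordered commutative ring is a commutative ring $R$ with partial order $\le$, $r\le s\Rightarrow r+t\le s+t$, positive cone $R^+$ closed under multiplication and containing all squares. $\mathbb{N}=\{1,2,\dots\}$, $\mathbb{N}_0=\mathbb{N}\cup\{0\}$. Archimedean: $kg+h\in R^+$ for all $k\in\mathbb{N}$ implies $g\in R^+$. $\mathrm{Loc}(R)$: the $s\in1+R^+$ with $rs\in R^+\Rightarrow r\in R^+$ for all $r$; localizable: each $r$ satisfies $-s\le r\le s$ for some $s\in\mathrm{Loc}(R)$. A ring morphism into $\mathbb{R}$ is positive if it maps $R^+$ (here $(\operatorname{dom}\widehat\varphi)\cap R^+$) into $[0,\infty)$. $\mathscr{C}_{\mathrm{a.e.}}(X)$ for a topological space $X$: continuous real functions defined on dense open subsets of $X$, modulo agreement on a dense open subset of the common domain, with pointwise operations on the intersection of domains. Each $a\in\mathscr{C}_{\mathrm{a.e.}}(X)$ has a unique representative $a_{\max}$ whose domain contains the domain of every representative and which restricts to each representative. $R_{\mathrm{loc}}$: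 fractions $r/s$ ($r\in R$, $s\in\mathrm{Loc}(R)$), $r/s=r'/s'$ iff $rs'=r's$, ordered by $p/q\le r/s$ iff $ps\le rq$. $R^{\mathrm{bd}}_{\mathrm{loc}}=\{a:\exists n\in\mathbb{N}_0,\ -n\le a\le n\}$. $\mathcal{K}(R)$: ring morphisms $\psi\colon R^{\mathrm{bd}}_{\mathrm{loc}}\to\mathbb{R}$ with $\psi(a)\ge0$ for $a\ge0$, weak-$*$ topology. $\mathrm{O}_{s<\infty}=\{\psi:\psi(1/s)>0\}$; for archimedean localizable $R$ these are dense open in $\mathcal{K}(R)$. For $r\in R$, $\widehat r\in\mathscr{C}_{\mathrm{a.e.}}(\mathcal{K}(R))$ is the class of $r_s\colon\mathrm{O}_{s<\infty}\to\mathbb{R}$, $\psi\mapsto\psi(1/s)^{-1}\psi(r/s)$, for any $s\in\mathrm{Loc}(R)$ with $r/s\in R^{\mathrm{bd}}_{\mathrm{loc}}$ (independent of $s$). Define $\operatorname{dom}\widehat\varphi=\{r\in R:\varphi\in\operatorname{dom}\widehat r_{\max}\}$ and $\widehat\varphi(r)=\widehat r_{\max}(\varphi)$ for $r\in\operatorname{dom}\widehat\varphi$. *)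

(* Defs.v *)
From HB Require Import structures.
From mathcomp Require Import all_boot all_order all_algebra.
From mathcomp Require Import boolp classical_sets reals.
Set Implicit Arguments. Unset Strict Implicit. Unset Printing Implicit Defensive.
Import Order.TTheory GRing.Theory Num.Theory.
Local Open Scope ring_scope.

Section PORing.
Variable R : comPzRingType.
Variable le : R -> R -> Prop.

Definition po_comring : Prop :=
  [/\ (forall r, le r r),
      (forall r s, le r s -> le s r -> r = s),
      (forall r s t, le r s -> le s t -> le r t) &
      [/\ (forall r s t, le r s -> le (r + t) (s + t)),
      (forall r s, le 0 r -> le 0 s -> le 0 (r * s)) &
      (forall r, le 0 (r * r))]].

Definition archimedean_po : Prop :=
  forall g h, (forall k : nat, (0 < k)%N -> le 0 (g *+ k + h)) -> le 0 g.

Definition isLoc (s : R) : Prop :=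
  le 0 (s - 1) /\ (forall r, le 0 (r * s) -> le 0 r).

Definition localizable : Prop :=
  forall r, exists s, isLoc s /\ le (- s) r /\ le r s.

(* Fractions r/s (s in Loc R) are represented by pairs; order on R_loc:
   p/q <= r/s iff p s <= r q. *)
Definition frac_le (p q r s : R) : Prop := le (p * s) (r * q).

(* r/s is a well-formed element of R_loc lying in R_loc^bd *)
Definition bdfrac (r s : R) : Prop :=
  isLoc s /\ exists n : nat, frac_le (- n%:R) 1 r s /\ frac_le r s n%:R 1.

Variable RR : realType.

(* K(R): positive unital ring morphisms R_loc^bd -> RR, represented as
   functions psi r s = psi(r/s) on representing pairs, constant on
   equivalence classes and (normalisation) 0 on pairs that do not
   represent an element of R_loc^bd. *)
Definition inK (psi : R -> R -> RR) : Prop :=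
  [/\ (forall r s, ~ bdfrac r s -> psi r s = 0),
      (forall r s r' s', bdfrac r s -> bdfrac r' s' -> r * s' = r' * s ->
          psi r s = psi r' s') &
      [/\ (forall r s r' s', bdfrac r s -> bdfrac r' s' ->
          psi (r * s' + r' * s) (s * s') = psi r s + psi r' s'),
      (forall r s r' s', bdfrac r s -> bdfrac r' s' ->
          psi (r * r') (s * s') = psi r s * psi r' s'),
      psi 1 1 = 1 &
      (forall r s, bdfrac r s -> frac_le 0 1 r s -> 0 <= psi r s)]].

(* weak-* topology on K(R), written out via basic neighbourhoods *)
Definition wnbhd (psi : R -> R -> RR) (l : seq (R * R)) (e : RR)
  (chi : R -> R -> RR) : Prop :=
  inK chi /\ forall a, a \in l -> `|chi a.1 a.2 - psi a.1 a.2| < e.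

Definition Kopen (U : (R -> R -> RR) -> Prop) : Prop :=
  (forall chi, U chi -> inK chi) /\
  forall psi, U psi -> exists l e, 0 < e /\ forall chi, wnbhd psi l e chi -> U chi.

Definition Kdense (D : (R -> R -> RR) -> Prop) : Prop :=
  forall V, Kopen V -> (exists chi, V chi) -> exists chi, V chi /\ D chi.

Definition Kdense_open U := Kopen U /\ Kdense U.

Definition Kcont_on (U : (R -> R -> RR) -> Prop) (f : (R -> R -> RR) -> RR) : Prop :=
  forall psi, U psi -> forall e, 0 < e ->
    exists l d, 0 < d /\ forall chi, U chi -> wnbhd psi l d chi ->
      `|f chi - f psi| < e.

Definition Ofin (s : R) (psi : R -> R -> RR) : Prop := inK psi /\ 0 < psi 1 s.

Definition r_s (r s : R) (psi : R -> R -> RR) : RR := (psi 1 s)^-1 * psi r s.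

(* (U, f) is a representative of hat r in C_a.e.(K(R)) *)
Definition hat_rep (r : R) (U : (R -> R -> RR) -> Prop) (f : (R -> R -> RR) -> RR) : Prop :=
  [/\ Kdense_open U, Kcont_on U f &
      exists s, bdfrac r s /\
        exists W, [/\ Kdense_open W, (forall psi, W psi -> U psi /\ Ofin s psi) &
                      forall psi, W psi -> f psi = r_s r s psi]].

(* phi in dom (hat r)_max : the domain of the maximal representative is the
   union of the domains of all representatives *)
Definition dom_hatphi (phi : R -> R -> RR) (r : R) : Prop :=
  exists U f, hat_rep r U f /\ U phi.

(* hat phi (r) = (hat r)_max (phi) *)
Definition hatphi (phi : R -> R -> RR) (r : R) : RR :=
  xget 0 [set c | exists U f, [/\ hat_rep r U f, U phi & f phi = c]].

End PORing.

(* Main.v *)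
Require Import Defs.
From HB Require Import structures.
From mathcomp Require Import all_boot all_order all_algebra.
From mathcomp Require Import boolp classical_sets reals.
From mathcomp Require Import ring lra.
Import Order.TTheory GRing.Theory Num.Theory.
Local Open Scope ring_scope.
Set Implicit Arguments. Unset Strict Implicit.

Section P.
Variables (R : comPzRingType) (le : R -> R -> Prop).
Hypothesis po : po_comring le.

Lemma le_trans' a b c : le a b -> le b c -> le a c.
Proof. by case: po => _ _ T _; apply: T. Qed.

Lemma le_sub a b : le a b <-> le 0 (b - a).
Proof.
case: po => _ _ _ [A _ _]; split => H.
  by have := A _ _ (- a) H; rewrite subrr.
by have := A _ _ a H; rewrite add0r subrK.
Qed.

Lemma le0D a b : le 0 a -> le 0 b -> le 0 (a + b).
Proof.
case: po => _ _ _ [A _ _] ha hb.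
by apply: le_trans' hb _; have := A _ _ b ha; rewrite add0r.
Qed.

Lemma le0M a b : le 0 a -> le 0 b -> le 0 (a * b).
Proof. by case: po => _ _ _ [_ M _]; apply: M. Qed.

Lemma le01 : le 0 1.
Proof. by case: po => _ _ _ [_ _ S]; have := S 1; rewrite mulr1. Qed.

Lemma le00 : le 0 0.
Proof. by case: po => Rf _ _ _. Qed.

Lemma le0n n : le 0 n%:R.
Proof. elim: n => [|n IH]; first exact: le00. by rewrite -addn1 natrD addrC; apply: le0D => //; apply: le01. Qed.

Lemma loc_ge0 s : isLoc le s -> le 0 s.
Proof. by case=> h _; rewrite -(subrK 1 s); apply: le0D => //; apply: le01. Qed.

Lemma bdfracE r s : bdfrac le r s <->
  (isLoc le s /\ exists n, le 0 (r + n%:R * s) /\ le 0 (n%:R * s - r)).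
Proof.
rewrite /bdfrac /frac_le.
have e1 n : r * 1 - - n%:R * s = r + n%:R * s by rewrite mulr1 mulNr opprK.
have e2 n : n%:R * s - r * 1 = n%:R * s - r by rewrite mulr1.
split => -[Hs [n [H1 H2]]]; split => //; exists n.
  by split; [rewrite -e1 -le_sub | rewrite -e2 -le_sub].
by split; rewrite le_sub ?e1 ?e2.
Qed.

Lemma isLocM s t : isLoc le s -> isLoc le t -> isLoc le (s * t).
Proof.
move=> Hs Ht; split.
  have -> : s * t - 1 = s * (t - 1) + (s - 1) by ring.
  apply: le0D; last by case: Hs.
  by apply: le0M; [apply: loc_ge0 | case: Ht].
move=> r H; apply: Hs.2; apply: Ht.2; by rewrite -mulrA.
Qed.

Lemma bdfrac_mul x s y t : bdfrac le x s -> bdfrac le y t -> bdfrac le (x * y) (s * t).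
Proof.
move=> /bdfracE [Hs [n [A B]]] /bdfracE [Ht [m [C D]]].
have s0 := loc_ge0 Hs; have t0 := loc_ge0 Ht.
have ns0 : le 0 (n%:R * s) by apply: le0M => //; apply: le0n.
have mt0 : le 0 (m%:R * t) by apply: le0M => //; apply: le0n.
apply/bdfracE; split; first exact: isLocM.
exists (3 * n * m)%N; split.
  have -> : x * y + (3 * n * m)%:R * (s * t) =
     (n%:R * s - x) * (m%:R * t - y) + n%:R * s * (y + m%:R * t) + m%:R * t * (x + n%:R * s).
    by rewrite !natrM; ring.
  by apply: le0D; [apply: le0D|]; apply: le0M.
have -> : (3 * n * m)%:R * (s * t) - x * y =
   (n%:R * s - x) * (y + m%:R * t) + n%:R * s * (m%:R * t - y) + m%:R * t * (x + n%:R * s).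
  by rewrite !natrM; ring.
by apply: le0D; [apply: le0D|]; apply: le0M.
Qed.

Lemma bdfrac_add a b t : bdfrac le a t -> bdfrac le b t -> bdfrac le (a + b) t.
Proof.
move=> /bdfracE [Ht [n [A B]]] /bdfracE [_ [m [C D]]].
apply/bdfracE; split => //; exists (n + m)%N; rewrite natrD; split.
  have -> : a + b + (n%:R + m%:R) * t = (a + n%:R * t) + (b + m%:R * t) by ring.
  exact: le0D.
have -> : (n%:R + m%:R) * t - (a + b) = (n%:R * t - a) + (m%:R * t - b) by ring.
exact: le0D.
Qed.

Lemma bdfrac_opp a t : bdfrac le a t -> bdfrac le (- a) t.
Proof.
move=> /bdfracE [Ht [n [A B]]]; apply/bdfracE; split => //; exists n; split.
  by rewrite addrC. by rewrite opprK addrC.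
Qed.

Lemma bdfrac1 s : isLoc le s -> bdfrac le 1 s.
Proof.
move=> Hs; apply/bdfracE; split => //; exists 1%N; rewrite mul1r; split.
  by apply: le0D; [apply: le01 | apply: loc_ge0].
by case: Hs.
Qed.

Lemma bdfrac0 s : isLoc le s -> bdfrac le 0 s.
Proof.
move=> Hs; apply/bdfracE; split => //; exists 0%N; rewrite mul0r add0r subr0; split; exact: le00.
Qed.

Lemma bdfrac_self s : isLoc le s -> bdfrac le s s.
Proof.
move=> Hs; apply/bdfracE; split => //; exists 1%N; rewrite mul1r subrr; split; last exact: le00.
by apply: le0D; apply: loc_ge0.
Qed.

Lemma bdfrac_loc r s : bdfrac le r s -> isLoc le s.
Proof. by case. Qed.

Lemma bdfrac_mulr r s t : bdfrac le r s -> isLoc le t -> bdfrac le r (s * t).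
Proof. by move=> H Ht; have := bdfrac_mul H (bdfrac1 Ht); rewrite mulr1. Qed.

Lemma bdfrac_trans r s t : bdfrac le r s -> bdfrac le s t -> bdfrac le r t.
Proof.
move=> /bdfracE [Hs [n [A B]]] /bdfracE [Ht [m [C D]]].
have h : le 0 (n%:R * (m%:R * t - s)) by apply: le0M => //; apply: le0n.
apply/bdfracE; split => //; exists (n * m)%N; rewrite natrM; split.
  have -> : r + n%:R * m%:R * t = (r + n%:R * s) + n%:R * (m%:R * t - s) by ring.
  exact: le0D.
have -> : n%:R * m%:R * t - r = (n%:R * s - r) + n%:R * (m%:R * t - s) by ring.
exact: le0D.
Qed.

Variable RR : realType.
Implicit Types (psi chi : R -> R -> RR) (U V D W O : (R -> R -> RR) -> Prop) (f g : (R -> R -> RR) -> RR).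

Lemma psi_mul1 psi r s t : inK le psi -> bdfrac le r s -> isLoc le t ->
  psi r (s * t) = psi r s * psi 1 t.
Proof.
case=> _ _ [_ M _ _] Hr Ht; have := M _ _ _ _ Hr (bdfrac1 Ht).
by rewrite mulr1.
Qed.

Lemma psi_add psi a b t : inK le psi -> bdfrac le a t -> bdfrac le b t ->
  psi (a + b) t = psi a t + psi b t.
Proof.
case=> _ W [A _ _ _] Ha Hb; rewrite -A //.
have Ht := bdfrac_loc Ha.
apply: W; first exact: bdfrac_add.
  rewrite -mulrDl; apply: bdfrac_mul => //; [exact: bdfrac_add | exact: bdfrac_self].
by ring.
Qed.

Lemma psi_0 psi t : inK le psi -> isLoc le t -> psi 0 t = 0.
Proof.
move=> Hp Ht; have := psi_add Hp (bdfrac0 Ht) (bdfrac0 Ht).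
rewrite addr0 => E.
have : psi 0 t + psi 0 t = psi 0 t + 0 by rewrite addr0 -E.
by move/addrI.
Qed.

Lemma psi_opp psi a t : inK le psi -> bdfrac le a t -> psi (- a) t = - psi a t.
Proof.
move=> Hp Ha; have := psi_add Hp Ha (bdfrac_opp Ha).
rewrite subrr psi_0 //; last exact: bdfrac_loc Ha.
by move=> E; apply/eqP; rewrite -addr_eq0 addrC -E.
Qed.

Lemma psi1_ge0 psi s : inK le psi -> isLoc le s -> 0 <= psi 1 s.
Proof.
case=> _ _ [_ _ _ P] Hs; apply: P; first exact: bdfrac1.
by rewrite /frac_le mul0r mulr1; apply: le01.
Qed.

Lemma psi_ge0 psi x s : inK le psi -> bdfrac le x s -> le 0 x -> 0 <= psi x s.
Proof.
case=> _ _ [_ _ _ P] Hs hx; apply: P => //.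
by rewrite /frac_le mul0r mulr1.
Qed.

Lemma psi1M psi s t : inK le psi -> isLoc le s -> isLoc le t ->
  psi 1 (s * t) = psi 1 s * psi 1 t.
Proof. by move=> Hp Hs Ht; apply: psi_mul1 => //; apply: bdfrac1. Qed.

Lemma rs_indep psi r s s' : inK le psi -> bdfrac le r s -> bdfrac le r s' ->
  0 < psi 1 s -> 0 < psi 1 s' -> r_s r s psi = r_s r s' psi.
Proof.
move=> Hp H1 H2 p1 p2; rewrite /r_s.
have e1 := psi_mul1 Hp H1 (bdfrac_loc H2).
have e2 : psi r (s * s') = psi r s' * psi 1 s.
  by rewrite mulrC; apply: psi_mul1 => //; apply: bdfrac_loc H1.
have n1 : psi 1 s != 0 by rewrite gt_eqF.
have n2 : psi 1 s' != 0 by rewrite gt_eqF.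
have -> : psi r s' = psi r s * psi 1 s' / psi 1 s by rewrite -e1 e2 mulfK.
field; by apply/andP.
Qed.

Lemma rs_add psi x s y t : inK le psi -> bdfrac le x s -> bdfrac le y t ->
  0 < psi 1 s -> 0 < psi 1 t ->
  r_s (x + y) (s * t) psi = r_s x s psi + r_s y t psi.
Proof.
move=> Hp Hx Hy p1 p2; have Hs := bdfrac_loc Hx; have Ht := bdfrac_loc Hy.
rewrite /r_s psi1M // psi_add //; last first.
  by rewrite mulrC; apply: bdfrac_mulr.
  by apply: bdfrac_mulr.
rewrite psi_mul1 // [s * t]mulrC psi_mul1 //.
field; apply/andP; split; by rewrite gt_eqF.
Qed.

Lemma rs_opp psi y t : inK le psi -> bdfrac le y t ->
  r_s (- y) t psi = - r_s y t psi.
Proof. by move=> Hp Hy; rewrite /r_s psi_opp // mulrN. Qed.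

Lemma rs_sub psi x s y t : inK le psi -> bdfrac le x s -> bdfrac le y t ->
  0 < psi 1 s -> 0 < psi 1 t ->
  r_s (x - y) (s * t) psi = r_s x s psi - r_s y t psi.
Proof.
move=> Hp Hx Hy p1 p2.
by rewrite rs_add // ?rs_opp //; apply: bdfrac_opp.
Qed.

Lemma rs_mul psi x s y t : inK le psi -> bdfrac le x s -> bdfrac le y t ->
  0 < psi 1 s -> 0 < psi 1 t ->
  r_s (x * y) (s * t) psi = r_s x s psi * r_s y t psi.
Proof.
move=> Hp Hx Hy p1 p2; have Hs := bdfrac_loc Hx; have Ht := bdfrac_loc Hy.
rewrite /r_s psi1M //.
case: Hp => _ _ [_ M _ _]; rewrite M //.
field; apply/andP; split; by rewrite gt_eqF.
Qed.

Definition cont2 (rop : RR -> RR -> RR) := forall a0 b0 e, 0 < e ->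
  exists2 d, 0 < d & forall a b, `|a - a0| < d -> `|b - b0| < d ->
    `|rop a b - rop a0 b0| < e.

Lemma cont2_add : cont2 (fun a b => a + b).
Proof.
move=> a0 b0 e he; exists (e / 2); first by lra.
move=> a b ha hb.
have -> : a + b - (a0 + b0) = (a - a0) + (b - b0) by ring.
by apply: le_lt_trans (ler_normD _ _) _; lra.
Qed.

Lemma cont2_sub : cont2 (fun a b => a - b).
Proof.
move=> a0 b0 e he; exists (e / 2); first by lra.
move=> a b ha hb.
have -> : a - b - (a0 - b0) = (a - a0) + - (b - b0) by ring.
by apply: le_lt_trans (ler_normD _ _) _; rewrite normrN; lra.
Qed.

Lemma cont2_mul : cont2 (fun a b => a * b).
Proof.
move=> a0 b0 e he.
set c := `|a0| + `|b0| + 1.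
have c0 : 0 < c by rewrite /c; have := normr_ge0 a0; have := normr_ge0 b0; lra.
exists (Num.min 1 (e / c)).
  by rewrite lt_min ltr01 /= divr_gt0.
move=> a b; rewrite !lt_min => /andP [ha1 ha2] /andP [hb1 hb2].
have -> : a * b - a0 * b0 = (a - a0) * (b - b0) + a0 * (b - b0) + b0 * (a - a0) by ring.
set u := a - a0 in ha1 ha2 *; set v := b - b0 in hb1 hb2 *.
have h1 : `|u * v + a0 * v + b0 * u| <= `|u| * `|v| + `|a0| * `|v| + `|b0| * `|u|.
  rewrite -!normrM; apply: le_trans (ler_normD _ _) _.
  by rewrite lerD2r; apply: ler_normD.
have hec : e / c * c = e by rewrite mulfVK // gt_eqF.
have nu := normr_ge0 u; have nv := normr_ge0 v.
have na := normr_ge0 a0; have nb := normr_ge0 b0.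
have h2 : `|u| * `|v| <= `|u| by rewrite -{2}(mulr1 `|u|) ler_wpM2l // ltW.
have h3 : `|a0| * `|v| <= `|a0| * (e / c) by rewrite ler_wpM2l // ltW.
have h4 : `|b0| * `|u| <= `|b0| * (e / c) by rewrite ler_wpM2l // ltW.
apply: le_lt_trans h1 _.
have : `|u| + `|a0| * (e / c) + `|b0| * (e / c) < e / c * c.
  rewrite /c; lra.
rewrite hec; lra.
Qed.

Lemma ball_lemma psi chi (l : seq (R * R)) d :
  (forall a, a \in l -> `|chi a.1 a.2 - psi a.1 a.2| < d) ->
  exists2 e, 0 < e & forall chi', (forall a, a \in l -> `|chi' a.1 a.2 - chi a.1 a.2| < e) ->
    forall a, a \in l -> `|chi' a.1 a.2 - psi a.1 a.2| < d.
Proof.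
elim: l => [|b l IH] H; first by exists 1 => // chi' _ a.
have [e he He] : exists2 e, 0 < e & forall chi', (forall a, a \in l -> `|chi' a.1 a.2 - chi a.1 a.2| < e) ->
    forall a, a \in l -> `|chi' a.1 a.2 - psi a.1 a.2| < d.
  by apply: IH => a ha; apply: H; rewrite in_cons ha orbT.
have hb := H b (mem_head _ _).
exists (Num.min e (d - `|chi b.1 b.2 - psi b.1 b.2|)).
  by rewrite lt_min he /= subr_gt0.
move=> chi' H' a; rewrite in_cons => /orP [/eqP -> | ha].
  have := H' b (mem_head _ _); rewrite lt_min => /andP [_ h].
  apply: le_lt_trans (ler_distD (chi b.1 b.2) _ _) _; lra.
apply: He ha => a' ha'.
have := H' a'; rewrite in_cons ha' orbT lt_min => /(_ isT) /andP [] //.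
Qed.

Lemma wnbhd_sub psi l e chi l' e' : wnbhd le psi l e chi ->
  {subset l' <= l} -> e <= e' -> wnbhd le psi l' e' chi.
Proof.
case=> hk H sl he; split => // a ha.
by apply: lt_le_trans he; apply: H; apply: sl.
Qed.

Lemma Kopen_ball psi l d : Kopen le (wnbhd le psi l d).
Proof.
split; first by move=> chi [].
move=> chi [hk H]; have [e he He] := ball_lemma H.
exists l, e; split => // chi' [hk' H']; split => //.
by apply: He.
Qed.

Lemma KopenI U V : Kopen le U -> Kopen le V -> Kopen le (fun chi => U chi /\ V chi).
Proof.
move=> [U1 U2] [V1 V2]; split; first by move=> chi [/U1].
move=> psi [hU hV].
have [l1 [e1 [he1 H1]]] := U2 _ hU; have [l2 [e2 [he2 H2]]] := V2 _ hV.
exists (l1 ++ l2), (Num.min e1 e2); split; first by rewrite lt_min he1.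
move=> chi hw; split.
  apply: H1; apply: wnbhd_sub hw _ _; first by move=> a ha; rewrite mem_cat ha.
  by rewrite ge_min lexx.
apply: H2; apply: wnbhd_sub hw _ _; first by move=> a ha; rewrite mem_cat ha orbT.
by rewrite ge_min lexx orbT.
Qed.

Lemma KdoI U V : Kdense_open le U -> Kdense_open le V ->
  Kdense_open le (fun chi => U chi /\ V chi).
Proof.
move=> [UO UD] [VO VD]; split; first exact: KopenI.
move=> O OO [chi Oc].
have [chi1 [O1 U1]] := UD _ OO (ex_intro _ chi Oc).
have OU := KopenI OO UO.
have [chi2 [[O2 U2] V2]] := VD _ OU (ex_intro _ chi1 (conj O1 U1)).
by exists chi2.
Qed.

Lemma Kcont_sub U V f : Kcont_on le U f -> (forall x, V x -> U x) -> Kcont_on le V f.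
Proof.
move=> H sub psi Vp e he; have [l [d [hd Hd]]] := H psi (sub _ Vp) e he.
by exists l, d; split => // chi Vc; apply: Hd; apply: sub.
Qed.

Lemma Kcont_comb U f g rop : cont2 rop -> Kcont_on le U f -> Kcont_on le U g ->
  Kcont_on le U (fun x => rop (f x) (g x)).
Proof.
move=> hr Hf Hg psi Up e he.
have [d0 hd0 Hd0] := hr (f psi) (g psi) e he.
have [l1 [d1 [hd1 H1]]] := Hf psi Up d0 hd0.
have [l2 [d2 [hd2 H2]]] := Hg psi Up d0 hd0.
exists (l1 ++ l2), (Num.min d1 d2); split; first by rewrite lt_min hd1.
move=> chi Uc hw; apply: Hd0.
  apply: H1 => //; apply: wnbhd_sub hw _ _; first by move=> a ha; rewrite mem_cat ha.
  by rewrite ge_min lexx.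
apply: H2 => //; apply: wnbhd_sub hw _ _; first by move=> a ha; rewrite mem_cat ha orbT.
by rewrite ge_min lexx orbT.
Qed.

Lemma Kcont_eval U r s : Kcont_on le U (fun chi => chi r s).
Proof.
move=> psi Up e he; exists [:: (r, s)], e; split => // chi _ [_ H].
by apply: (H (r, s)); rewrite mem_head.
Qed.

Lemma Kcont_const U (c : RR) : Kcont_on le U (fun _ => c).
Proof.
move=> psi Up e he; exists [::], 1; split => // chi _ _.
by rewrite subrr normr0.
Qed.

Lemma approx U D f g phi e : Kopen le U -> U phi -> Kdense le D ->
  Kcont_on le U f -> Kcont_on le U g -> 0 < e ->
  exists chi, [/\ U chi, D chi, `|f chi - f phi| < e & `|g chi - g phi| < e].
Proof.
move=> UO Up DD Hf Hg he.
have [l1 [d1 [hd1 H1]]] := Hf phi Up e he.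
have [l2 [d2 [hd2 H2]]] := Hg phi Up e he.
set O := fun chi => U chi /\ wnbhd le phi (l1 ++ l2) (Num.min d1 d2) chi.
have OO : Kopen le O by apply: KopenI => //; apply: Kopen_ball.
have Oph : exists chi, O chi.
  exists phi; split => //; split; first exact: UO.1.
  by move=> a _; rewrite subrr normr0 lt_min hd1.
have [chi [[Uc hw] Dc]] := DD _ OO Oph.
exists chi; split => //.
  apply: H1 => //; apply: wnbhd_sub hw _ _; first by move=> a ha; rewrite mem_cat ha.
  by rewrite ge_min lexx.
apply: H2 => //; apply: wnbhd_sub hw _ _; first by move=> a ha; rewrite mem_cat ha orbT.
by rewrite ge_min lexx orbT.
Qed.

Lemma rep_unique phi r U f U' f' : hat_rep le r U f -> hat_rep le r U' f' ->
  U phi -> U' phi -> f phi = f' phi.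
Proof.
case=> [[UO UD] Uc [s [Hs [W [WD WU Wf]]]]].
case=> [[UO' UD'] Uc' [s' [Hs' [W' [WD' WU' Wf']]]]] Up Up'.
have VO := KopenI UO UO'.
have DD := (KdoI WD WD').2.
have Vc : Kcont_on le (fun chi => U chi /\ U' chi) f by apply: Kcont_sub Uc _ => x [].
have Vc' : Kcont_on le (fun chi => U chi /\ U' chi) f' by apply: Kcont_sub Uc' _ => x [].
apply/eqP; apply: contraT => hne.
have he : 0 < `|f phi - f' phi| / 2 by rewrite divr_gt0 // normr_gt0 subr_eq0.
have [chi [[Uc1 Uc2] [Wc Wc'] h1 h2]] := approx VO (conj Up Up') DD Vc Vc' he.
have [_ [hk p1]] := WU _ Wc; have [_ [_ p2]] := WU' _ Wc'.
have eq : f chi = f' chi by rewrite Wf // Wf' //; apply: rs_indep.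
have := ler_distD (f chi) (f phi) (f' phi).
rewrite eq in h1 *; rewrite [`|f phi - f' chi|]distrC; lra.
Qed.

Lemma hatphi_eq phi r U f : hat_rep le r U f -> U phi -> hatphi le phi r = f phi.
Proof.
move=> H Up; apply: xget_unique; first by exists U, f.
by move=> y [U' [f' [H' Up' <-]]]; apply: rep_unique H' H Up' Up.
Qed.

Lemma rep_comb (bop : R -> R -> R) rop x y U f U' f' : cont2 rop ->
  (forall x s y t, bdfrac le x s -> bdfrac le y t -> bdfrac le (bop x y) (s * t) /\
     forall psi, inK le psi -> 0 < psi 1 s -> 0 < psi 1 t ->
       r_s (bop x y) (s * t) psi = rop (r_s x s psi) (r_s y t psi)) ->
  hat_rep le x U f -> hat_rep le y U' f' ->
  hat_rep le (bop x y) (fun chi => U chi /\ U' chi) (fun chi => rop (f chi) (f' chi)).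
Proof.
move=> hr Hid.
case=> [UD Uc [s [Hs [W [WD WU Wf]]]]].
case=> [UD' Uc' [s' [Hs' [W' [WD' WU' Wf']]]]].
split; first exact: KdoI.
  by apply: Kcont_comb => //; [apply: Kcont_sub Uc _ | apply: Kcont_sub Uc' _] => z [].
have [Hb Hv] := Hid _ _ _ _ Hs Hs'.
exists (s * s'); split => //; exists (fun chi => W chi /\ W' chi); split.
- exact: KdoI.
- move=> psi [Wp Wp']; have [Up [hk p1]] := WU _ Wp; have [Up' [_ p2]] := WU' _ Wp'.
  split => //; split => //.
  by rewrite psi1M //; [apply: mulr_gt0 | apply: bdfrac_loc Hs | apply: bdfrac_loc Hs'].
- move=> psi [Wp Wp']; have [Up [hk p1]] := WU _ Wp; have [Up' [_ p2]] := WU' _ Wp'.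
  by rewrite Wf // Wf' // Hv.
Qed.

Lemma isLoc1 : isLoc le 1.
Proof. split; first by rewrite subrr; apply: le00. by move=> r; rewrite mulr1. Qed.

Lemma rep_one : hat_rep le 1 (fun chi => inK le chi) (fun _ => 1).
Proof.
have KO : Kopen le (fun chi => inK le chi).
  split => // psi hp; exists [::], 1; split; first exact: ltr01.
  by move=> chi [].
split.
- split => // V [V1 _] [chi Vc]; exists chi; split => //; exact: V1.
- exact: Kcont_const.
exists 1; split; first exact: bdfrac1 isLoc1.
exists (fun chi => inK le chi); split => //.
- split => // V [V1 _] [chi Vc]; exists chi; split => //; exact: V1.
- by move=> psi hp; split => //; split => //; case: hp => _ _ [_ _ -> _]; apply: ltr01.
- by move=> psi hp; rewrite /r_s; case: hp => _ _ [_ _ -> _]; rewrite invr1 mulr1.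
Qed.

Lemma rep_pos phi x U f : hat_rep le x U f -> U phi -> le 0 x -> 0 <= f phi.
Proof.
move=> H Up hx; case: H => [[UO UD] Uc [s [Hs [W [[WO WD] WU Wf]]]]].
rewrite leNgt; apply/negP => hlt.
have he : 0 < - f phi by rewrite oppr_gt0.
have [chi [Uc1 Wc h1 _]] := approx UO Up WD Uc Uc he.
have [_ [hk p1]] := WU _ Wc.
have : 0 <= f chi.
  rewrite Wf // /r_s; apply: mulr_ge0; first by rewrite invr_ge0 ltW.
  exact: psi_ge0.
have := ler_norm (f chi - f phi); lra.
Qed.

Lemma rep_more r s U f : hat_rep le s U f -> bdfrac le r s ->
  hat_rep le r U (fun chi => chi r s * f chi).
Proof.
case=> [UD Uc [t [Ht [W [WD WU Wf]]]]] Hr.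
split => //; first by apply: Kcont_comb => //; [apply: cont2_mul | apply: Kcont_eval].
exists t; split; first exact: bdfrac_trans Ht.
exists W; split => // psi Wp; have [Up [hk p1]] := WU _ Wp.
rewrite Wf // /r_s mulrCA; congr (_ * _).
case: (hk) => _ W0 [_ M _ _]; rewrite -M //.
apply: W0; [exact: bdfrac_mul | exact: bdfrac_trans Ht | by ring].
Qed.

End P.

Theorem proposition35 (R : comPzRingType) (le : R -> R -> Prop)
  (RR : realType) (phi : R -> R -> RR) :
  po_comring le -> archimedean_po le -> localizable le -> inK le phi ->
  (* dom hat phi is a subring of R *)
  [/\ dom_hatphi le phi 1,
      (forall x y, dom_hatphi le phi x -> dom_hatphi le phi y ->
         dom_hatphi le phi (x - y)),
      (forall x y, dom_hatphi le phi x -> dom_hatphi le phi y ->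
         dom_hatphi le phi (x * y)),
  (* hat phi is a positive ring morphism on it *)
      [/\ hatphi le phi 1 = 1,
          (forall x y, dom_hatphi le phi x -> dom_hatphi le phi y ->
             hatphi le phi (x + y) = hatphi le phi x + hatphi le phi y),
          (forall x y, dom_hatphi le phi x -> dom_hatphi le phi y ->
             hatphi le phi (x * y) = hatphi le phi x * hatphi le phi y) &
          (forall x, dom_hatphi le phi x -> le 0 x -> 0 <= hatphi le phi x)] &
  (* moreover part *)
      (forall r s, dom_hatphi le phi s -> isLoc le s -> bdfrac le r s ->
         dom_hatphi le phi r)].
Proof.
move=> po _ _ hphi.
have Hadd : forall x s y t, bdfrac le x s -> bdfrac le y t -> bdfrac le (x + y) (s * t) /\
     forall psi : R -> R -> RR, inK le psi -> 0 < psi 1 s -> 0 < psi 1 t ->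
       r_s (x + y) (s * t) psi = r_s x s psi + r_s y t psi.
  move=> x s y t Hx Hy; split; last by move=> psi hp p1 p2; exact: (rs_add po).
  apply: (bdfrac_add po); first exact: (bdfrac_mulr po Hx (bdfrac_loc Hy)).
  by rewrite mulrC; apply: (bdfrac_mulr po Hy (bdfrac_loc Hx)).
have Hsub : forall x s y t, bdfrac le x s -> bdfrac le y t -> bdfrac le (x - y) (s * t) /\
     forall psi : R -> R -> RR, inK le psi -> 0 < psi 1 s -> 0 < psi 1 t ->
       r_s (x - y) (s * t) psi = r_s x s psi - r_s y t psi.
  move=> x s y t Hx Hy; split; last by move=> psi hp p1 p2; exact: (rs_sub po).
  by have [] := Hadd _ _ _ _ Hx (bdfrac_opp po Hy).
have Hmul : forall x s y t, bdfrac le x s -> bdfrac le y t -> bdfrac le (x * y) (s * t) /\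
     forall psi : R -> R -> RR, inK le psi -> 0 < psi 1 s -> 0 < psi 1 t ->
       r_s (x * y) (s * t) psi = r_s x s psi * r_s y t psi.
  move=> x s y t Hx Hy; split; last by move=> psi hp p1 p2; exact: (rs_mul po).
  exact: (bdfrac_mul po).
have one := rep_one po RR.
split.
- by exists (fun chi => inK le chi), (fun _ => 1).
- move=> x y [U [f [H Up]]] [U' [f' [H' Up']]].
  exists (fun chi => U chi /\ U' chi), (fun chi => f chi - f' chi); split => //.
  exact: (rep_comb po (cont2_sub (RR:=RR)) Hsub H H').
- move=> x y [U [f [H Up]]] [U' [f' [H' Up']]].
  exists (fun chi => U chi /\ U' chi), (fun chi => f chi * f' chi); split => //.
  exact: (rep_comb po (cont2_mul (RR:=RR)) Hmul H H').
- split.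
  + by rewrite (hatphi_eq po one hphi).
  + move=> x y [U [f [H Up]]] [U' [f' [H' Up']]].
    have H2 := rep_comb po (cont2_add (RR:=RR)) Hadd H H'.
    rewrite (hatphi_eq po H2 (conj Up Up')).
    by rewrite (hatphi_eq po H Up) (hatphi_eq po H' Up').
  + move=> x y [U [f [H Up]]] [U' [f' [H' Up']]].
    have H2 := rep_comb po (cont2_mul (RR:=RR)) Hmul H H'.
    rewrite (hatphi_eq po H2 (conj Up Up')).
    by rewrite (hatphi_eq po H Up) (hatphi_eq po H' Up').
  + move=> x [U [f [H Up]]] hx.
    rewrite (hatphi_eq po H Up); exact: (rep_pos H Up hx).
- move=> r s [U [f [H Up]]] _ Hr.
  by exists U, (fun chi => chi r s * f chi); split => //; apply: (rep_more po).
Qed.
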